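(* For every real $\alpha\in(0,1]$ there exists an infinite $\mathbb{N}^*\setminus Q$--free set $Q\subseteq\mathbb{N}^*$ with $\nu(Q)=\alpha$.
   Context: $\mathbb{N}^*$ denotes the set of positive integers. A set $Q\subseteq\mathbb{N}^*$ is called $\mathbb{N}^*\setminus Q$--free if for every $q\in\mathbb{N}^*$: $q\in Q$ if and only if no $v\in\mathbb{N}^*\setminus Q$ divides $q$. For an infinite set $Q\subseteq\mathbb{N}^*$, its exponent of convergence is $\nu(Q)=\inf\{\nu>0:\sum_{q\in Q}q^{-\nu}<\infty\}$. *)

(* Defs.v *)
From Stdlib Require Import Reals Arith.
Open Scope R_scope.

(* A set Q of positive integers is represented by a boolean predicate on nat;
   "Q ⊆ N*" is stated separately (Q 0 = false). *)
Definition subset_Nstar (Q : nat -> bool) : Prop :=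
  forall q : nat, Q q = true -> (0 < q)%nat.

Definition compl_free (Q : nat -> bool) : Prop :=
  forall q : nat, (0 < q)%nat ->
    (Q q = true <-> ~ (exists v : nat, (0 < v)%nat /\ Q v = false /\ Nat.divide v q)).

Definition infinite_set (Q : nat -> bool) : Prop :=
  forall N : nat, exists q : nat, (N < q)%nat /\ Q q = true.

Definition Q_term (Q : nat -> bool) (nu : R) (n : nat) : R :=
  if Q n then (if Nat.eqb n 0 then 0 else Rpower (INR n) (- nu)) else 0.

Definition Q_summable (Q : nat -> bool) (nu : R) : Prop :=
  exists l : R, infinite_sum (Q_term Q nu) l.

Definition exponent_of_convergence_is (Q : nat -> bool) (alpha : R) : Prop :=
  (forall nu : R, 0 < nu -> Q_summable Q nu -> alpha <= nu) /\
  (forall b : R, (forall nu : R, 0 < nu -> Q_summable Q nu -> b <= nu) -> b <= alpha).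

(* Main.v *)
Require Import Defs.
From Stdlib Require Import Reals Arith Classical.
From Stdlib Require Import Reals Lra Lia.
From mathcomp Require Import all_boot zify.

Definition smooth (T n : nat) : bool := all (fun p => p <= T)%N (primes n).

Lemma count_split (N T : nat) :
  N = (\sum_(1 <= i < N.+1) smooth T i + \sum_(1 <= i < N.+1) ~~ smooth T i)%N.
Proof.
rewrite -big_split /=.
transitivity (\sum_(1 <= i < N.+1) 1)%N; first by rewrite sum_nat_const_nat; lia.
by apply: eq_bigr => i _; case: (smooth T i).
Qed.

Lemma nonsmooth_bound (N T : nat) :
  (\sum_(1 <= i < N.+1) ~~ smooth T i <=
   \sum_(p < N.+1 | prime p && (T < p)%N) N %/ p)%N.
Proof.
rewrite (eq_bigr (fun p : 'I_N.+1 => \sum_(1 <= i < N.+1) (p %| i))%N); last first.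
  by move=> p _; rewrite divn_count_dvd.
rewrite exchange_big /=.
rewrite big_nat_cond [X in (_ <= X)%N]big_nat_cond.
apply: leq_sum => i /andP [/andP [Hi1 HiN] _].
case Hs: (smooth T i) => //=.
move: Hs => /negbT /allPn [p Hp HpT].
move: Hp; rewrite mem_primes => /and3P [pp _ pdi].
have HpN : (p < N.+1)%N.
  have := dvdn_leq Hi1 pdi. lia.
rewrite (bigD1 (Ordinal HpN)) /=; last by rewrite pp; move: HpT; rewrite -ltnNge.
by rewrite pdi.
Qed.

Lemma exp2_le (p e : nat) : (2 <= p)%N -> (2 ^ e <= p ^ e)%N.
Proof. move=> hp; elim: e => // e IH; rewrite !expnS leq_mul //. Qed.

Lemma logn_le (p i k : nat) : (0 < i)%N -> (i <= 2 ^ k)%N -> (logn p i < k.+1)%N.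
Proof.
move=> i0 ik.
case: (boolP (prime p)) => pp; last by rewrite lognE (negbTE pp).
have h1 := dvdn_leq i0 (pfactor_dvdnn p i).
have h2 := @exp2_le p (logn p i) (prime_gt1 pp).
rewrite ltnS -(@leq_exp2l 2) //. lia.
Qed.

Lemma smooth_bound (k T : nat) :
  (\sum_(1 <= i < (2 ^ k).+1) smooth T i <= (k.+1) ^ (T.+1))%N.
Proof.
set N := (2 ^ k)%N.
have -> : (\sum_(1 <= i < N.+1) smooth T i = \sum_(i < N.+1 | (0 < i)%N && smooth T i) 1)%N.
  rewrite -(big_mkord (fun i => (0 < i)%N && smooth T i) (fun=> 1%N)) [RHS]big_mkcond [RHS]big_ltn //= add0n.
  by apply: eq_big_nat => i /andP [h _]; rewrite h; case: (smooth T i).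
rewrite sum1dep_card.
have -> : ((k.+1) ^ (T.+1) = #|{ffun 'I_T.+1 -> 'I_k.+1}|)%N by rewrite card_ffun !card_ord.
pose f := fun i : 'I_N.+1 => [ffun p : 'I_T.+1 => (inord (logn p i) : 'I_k.+1)].
apply: (@leq_card_in _ _ f).
move=> i j; rewrite !inE => /andP [i0 si] /andP [j0 sj] Hf.
apply: val_inj; apply: eqn_from_log => // p.
case: (leqP p T) => hp.
  have := congr1 (fun g : {ffun 'I_T.+1 -> 'I_k.+1} => val (g (Ordinal (hp : (p < T.+1)%N)))) Hf.
  rewrite /f !ffunE /= !inordK //; apply: logn_le => //; rewrite -ltnS; exact: ltn_ord.
have z : forall m : nat, smooth T m -> logn p m = 0%N.
  move=> m sm; apply/eqP; rewrite -leqn0 leqNgt logn_gt0; apply/negP => hm.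
  have := allP sm p hm; rewrite /=; lia.
by rewrite !z.
Qed.

Lemma sq_le_pow2 (j : nat) : (4 <= j)%N -> (j * j <= 2 ^ j)%N.
Proof.
elim: j => // j IH hj.
case: (ltngtP j 3) => h; first lia.
- have := IH h. rewrite expnS. nia.
- subst j. by [].
Qed.

Lemma erdos_nat (T : nat) : exists N : nat,
  (T <= N)%N /\ (0 < N)%N /\ (N <= 2 * \sum_(p < N.+1 | prime p && (T < p)%N) N %/ p)%N.
Proof.
set j := (T + 4)%N.
set k := (2 ^ j).-1.
have hk : k.+1 = (2 ^ j)%N by rewrite /k prednK // expn_gt0.
exists (2 ^ k)%N.
have hjk : (T < k)%N.
  have := ltn_expl j (isT : (1 < 2)%N). rewrite /k /j. lia.
split; first by have := ltn_expl k (isT : (1 < 2)%N); lia.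
split; first by rewrite expn_gt0.
have hsplit := count_split (2 ^ k) T.
have hs := smooth_bound k T.
have hn := nonsmooth_bound (2 ^ k) T.
have hpow : (2 * (k.+1) ^ (T.+1) <= 2 ^ k)%N.
  rewrite hk -expnM -expnS leq_exp2l //.
  have := sq_le_pow2 j (leq_addl T 4). rewrite /k /j. nia.
lia.
Qed.
Open Scope R_scope.
Lemma big_to_sum (n : nat) (P : pred nat) (g : nat -> nat) :
  INR (\sum_(p < n.+1 | P p) g p)%N = sum_f_R0 (fun p => if P p then INR (g p) else 0) n.
Proof.
rewrite big_mkcond.
elim: n => [|n IH]; first by rewrite big_ord_recr big_ord0 /=; case: (P 0%N).
rewrite big_ord_recr /= plus_INR -IH /=. f_equal. by case: (P n.+1).
Qed.

Lemma sum_scal (n : nat) (P : pred nat) (c : R) (h : nat -> R) :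
  sum_f_R0 (fun p => if P p then (c * h p) else 0) n =
  (c * sum_f_R0 (fun p => if P p then h p else 0) n).
Proof.
elim: n => [|n IH] /=; first by case: (P 0%N); ring.
rewrite IH; case: (P n.+1); ring.
Qed.

Lemma erdos (T : nat) : exists N : nat, (T <= N)%coq_nat /\
  (1/2 <= sum_f_R0 (fun m => if prime m && (T < m)%N then / INR m else 0) N).
Proof.
have [N [hTN [hN0 hN]]] := erdos_nat T.
exists N; split; first by apply/leP.
set P := (fun p => prime p && (T < p)%N).
have h1 : (INR N <= 2 * INR (\sum_(p < N.+1 | P p) N %/ p)%N).
  replace 2 with (INR 2) by (simpl; ring); rewrite -mult_INR; apply: le_INR; apply/leP; exact: hN.
rewrite big_to_sum in h1.
have h2 : (sum_f_R0 (fun p => if P p then INR (N %/ p) else 0) N <=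
           sum_f_R0 (fun p => if P p then (INR N * / INR p) else 0) N).
  apply: sum_Rle => p _; case Pp: (P p); last lra.
  have p0 : (0 < p)%N by move: Pp => /andP [pp _]; exact: prime_gt0.
  have hp : (0 < INR p) by apply: lt_0_INR; apply/ltP.
  have : (INR (N %/ p) * INR p <= INR N).
    rewrite -mult_INR; apply: le_INR; apply/leP; exact: leq_divM.
  move=> h. apply (Rmult_le_reg_r (INR p)) => //.
  rewrite Rmult_assoc Rinv_l; lra.
rewrite sum_scal in h2.
have hN' : (0 < INR N) by apply: lt_0_INR; apply/ltP.
rewrite /P in h1 h2.
nra.
Qed.

Open Scope R_scope.

Lemma ln_ineq y : 0 < y -> ln y <= y - 1.
Proof. move=> hy; have := exp_ineq1_le (ln y); rewrite exp_ln //; lra. Qed.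

Lemma Rpower_pos x y : 0 < Rpower x y.
Proof. rewrite /Rpower; exact: exp_pos. Qed.

Lemma Rpower_1l y : Rpower 1 y = 1.
Proof. by rewrite /Rpower ln_1 Rmult_0_r exp_0. Qed.

Lemma key_ineq x t : 1 <= x -> 0 < t ->
  t * Rpower (x + 1) (- (1 + t)) <= Rpower x (- t) - Rpower (x + 1) (- t).
Proof.
move=> hx ht; rewrite /Rpower.
have hx0 : 0 < x by lra.
have hx1 : 0 < x + 1 by lra.
set L1 := ln x; set L2 := ln (x + 1).
have ha : / (x + 1) <= L2 - L1.
  have := ln_ineq (x * / (x + 1)).
  rewrite ln_mult; last (apply: Rinv_0_lt_compat; lra); last lra.
  rewrite ln_Rinv; last lra.
  have -> : x * / (x + 1) - 1 = - / (x + 1) by field; lra.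
  have : 0 < x * / (x + 1) by apply: Rmult_lt_0_compat => //; apply: Rinv_0_lt_compat.
  rewrite /L1 /L2; move=> h1 h2; have := h2 h1; lra.
have e1 : exp (- (1 + t) * L2) = exp (- t * L2) * / (x + 1).
  rewrite -(exp_ln (x + 1)) // -exp_Ropp -exp_plus /L2. f_equal. ring.
have e2 : exp (- t * L1) = exp (- t * L2) * exp (t * (L2 - L1)).
  rewrite -exp_plus; f_equal; ring.
rewrite e1 e2.
have E0 : 0 < exp (- t * L2) by apply: exp_pos.
have hexp := exp_ineq1_le (t * (L2 - L1)).
have hinv : 0 < / (x + 1) by apply: Rinv_0_lt_compat.
set E := exp (- t * L2) in E0 hexp *.
set F := exp (t * (L2 - L1)) in hexp *.
have h3 : t * / (x + 1) <= t * (L2 - L1) by apply: Rmult_le_compat_l; lra.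
have h4 : E * (t * / (x + 1)) <= E * (F - 1) by apply: Rmult_le_compat_l; lra.
lra.
Qed.

Lemma Rpow_decr x y c : 0 < x -> x <= y -> 0 <= c -> Rpower y (- c) <= Rpower x (- c).
Proof.
move=> hx hxy hc; rewrite !Rpower_Ropp; apply: Rinv_le_contravar; first exact: Rpower_pos.
apply: Rle_Rpower_l => //; lra.
Qed.

Fixpoint Hs (s : R) (K : nat) : R :=
  match K with O => 0 | S K' => Hs s K' + Rpower (INR (S K')) (- s) end.

Lemma Hs_bound t K : 0 < t -> Hs (1 + t) (S K) <= 1 + / t - / t * Rpower (INR (S K)) (- t).
Proof.
move=> ht; elim: K => [|K IH].
  rewrite /= Rpower_1l Rplus_0_l Rpower_1l; lra.
have hK : 1 <= INR (S K) by rewrite S_INR; have := pos_INR K; lra.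
have := key_ineq _ _ hK ht.
rewrite -S_INR => hkey.
change (Hs (1 + t) (S (S K))) with (Hs (1 + t) (S K) + Rpower (INR (S (S K))) (- (1 + t))).
have hinv : 0 < / t by apply: Rinv_0_lt_compat.
have : Rpower (INR (S (S K))) (- (1 + t)) <= / t * Rpower (INR (S K)) (- t) - / t * Rpower (INR (S (S K))) (- t).
  apply: (Rmult_le_reg_l t) => //.
  rewrite Rmult_minus_distr_l -!Rmult_assoc Rinv_r; lra.
lra.
Qed.

Lemma Hs_ub t K : 0 < t -> Hs (1 + t) K <= 1 + / t.
Proof.
move=> ht; have hinv : 0 < / t by apply: Rinv_0_lt_compat.
case: K => [|K]; first (simpl; lra).
have := Hs_bound _ K ht.
have := Rpower_pos (INR (S K)) (- t).
have : 0 <= / t * Rpower (INR (S K)) (- t) by apply: Rmult_le_pos; [lra | apply: Rlt_le; apply: Rpower_pos].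
lra.
Qed.

Definition Rleb (x y : R) : bool := if Rle_dec x y then true else false.

Lemma RlebP x y : Rleb x y = true <-> x <= y.
Proof. rewrite /Rleb; case: (Rle_dec x y) => h; split => //. Qed.

Fixpoint cnt (a : R) (n : nat) : nat :=
  match n with
  | O => O
  | S m => (cnt a m + (if prime m && Rleb (INR (cnt a m) + 1) (Rpower (INR m) a) then 1 else 0))%N
  end.

Definition sel (a : R) (m : nat) : bool := prime m && Rleb (INR (cnt a m) + 1) (Rpower (INR m) a).

Lemma cntS a m : cnt a (S m) = (cnt a m + (if sel a m then 1 else 0))%N.
Proof. reflexivity. Qed.

Definition Qa (a : R) (n : nat) : bool := (n == 1)%N || sel a n.

Lemma sel_prime a m : sel a m -> prime m.
Proof. by move=> /andP []. Qed.

Lemma sel0 a : sel a 0 = false.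
Proof. by []. Qed.

Lemma sel1 a : sel a 1 = false.
Proof. by []. Qed.

Lemma sel_bound a m : sel a m -> INR (cnt a m) + 1 <= Rpower (INR m) a.
Proof. by move=> /andP [_ /RlebP]. Qed.

Definition selterm (a nu : R) (m : nat) : R := if sel a m then Rpower (INR m) (- nu) else 0.

Lemma selterm_ge0 a nu m : 0 <= selterm a nu m.
Proof. rewrite /selterm; case: (sel a m); [apply: Rlt_le; apply: Rpower_pos | lra]. Qed.

Lemma Qterm_ge0 Q nu m : 0 <= Q_term Q nu m.
Proof.
rewrite /Q_term; case: (Q m); last lra.
case: (Nat.eqb m 0); [lra | apply: Rlt_le; apply: Rpower_pos].
Qed.

Lemma sel_Q a nu m : selterm a nu m <= Q_term (Qa a) nu m.
Proof.
rewrite /selterm.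
case hs: (sel a m); last exact: Qterm_ge0.
have hm := prime_gt0 (sel_prime _ _ hs).
rewrite /Q_term /Qa hs orbT.
have -> : Nat.eqb m 0 = false by apply Nat.eqb_neq; lia.
lra.
Qed.

Lemma Q_le a nu m : Q_term (Qa a) nu m <= (if (m == 1)%N then 1 else 0) + selterm a nu m.
Proof.
rewrite /selterm /Q_term /Qa.
case: (eqVneq m 1%N) => [->|hm].
  by rewrite sel1 /= Rpower_1l; lra.
rewrite /=.
case hs: (sel a m); last lra.
have hm0 := prime_gt0 (sel_prime _ _ hs).
have -> : Nat.eqb m 0 = false by apply Nat.eqb_neq; lia.
lra.
Qed.

Lemma ind_sum n : sum_f_R0 (fun m => if (m == 1)%N then 1 else 0) n <= 1.
Proof.
suff : sum_f_R0 (fun m => if (m == 1)%N then 1 else 0) n = if (n == 0)%N then 0 else 1.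
  by move=> ->; case: (n == 0)%N; lra.
elim: n => [|n IH] //=.
rewrite IH; case: n {IH} => [|n] /=; first lra.
lra.
Qed.

Lemma pow_cmp a nu x y : 0 < a -> 0 <= nu -> 0 < x -> 0 < y -> y <= Rpower x a ->
  Rpower x (- nu) <= Rpower y (- (nu / a)).
Proof.
move=> ha hnu hx hy hyx.
have h := Rpow_decr y (Rpower x a) (nu / a) hy hyx.
rewrite Rpower_mult in h.
replace (a * - (nu / a)) with (- nu) in h by (field; lra).
apply: h; apply: Rmult_le_pos => //; apply: Rlt_le; apply: Rinv_0_lt_compat => //.
Qed.

Lemma selsum_Hs a nu n : 0 < a -> 0 <= nu ->
  sum_f_R0 (selterm a nu) n <= Hs (nu / a) (cnt a (S n)).
Proof.
move=> ha hnu; elim: n => [|n IH].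
  by rewrite /= /selterm sel0 /=; lra.
rewrite [sum_f_R0 _ (S n)]/= (cntS a (S n)).
rewrite /selterm; case hs: (sel a (S n)); last by rewrite addn0; rewrite /selterm in IH; lra.
rewrite addn1.
change (Hs (nu / a) (S (cnt a (S n)))) with (Hs (nu / a) (cnt a (S n)) + Rpower (INR (S (cnt a (S n)))) (- (nu / a))).
rewrite /selterm in IH.
have : Rpower (INR (S n)) (- nu) <= Rpower (INR (S (cnt a (S n)))) (- (nu / a)).
  apply: pow_cmp => //.
  - apply: lt_0_INR; lia.
  - apply: lt_0_INR; lia.
  - rewrite S_INR; exact: (sel_bound _ _ hs).
lra.
Qed.

Lemma sum_nonneg (f : nat -> R) n : (forall m, 0 <= f m) -> 0 <= sum_f_R0 f n.
Proof.
move=> h; elim: n => [|n IH] /=; first exact: h.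
have := h (S n); lra.
Qed.

Lemma split_sum (f : nat -> R) T N : (T <= N)%coq_nat ->
  sum_f_R0 f N = sum_f_R0 f T + sum_f_R0 (fun m => if (T < m)%N then f m else 0) N.
Proof.
have zero : forall n, (n <= T)%coq_nat -> sum_f_R0 (fun m => if (T < m)%N then f m else 0) n = 0.
  elim => [|n IH] h /=; first by [].
  rewrite IH; last lia.
  have -> : (T < n.+1)%N = false by apply/negbTE; rewrite -leqNgt; apply/leP; lia.
  ring.
move=> h; induction h as [|N hN IH].
  rewrite zero //; ring.
rewrite /= IH.
have -> : (T < N.+1)%N = true by apply/leP; lia.
ring.
Qed.

Lemma growing_Q a nu : Un_growing (sum_f_R0 (Q_term (Qa a) nu)).
Proof. move=> n /=; have := Qterm_ge0 (Qa a) nu (S n); lra. Qed.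

Lemma summable_above a nu : 0 < a -> a < nu -> Q_summable (Qa a) nu.
Proof.
move=> ha han.
set t := nu / a - 1.
have ht : 0 < t.
  rewrite /t; have : 1 < nu / a.
    apply: (Rmult_lt_reg_r a) => //. rewrite Rmult_1_l /Rdiv Rmult_assoc Rinv_l; lra.
  lra.
have hub : forall n, sum_f_R0 (Q_term (Qa a) nu) n <= 2 + / t.
  move=> n.
  have h1 : sum_f_R0 (Q_term (Qa a) nu) n <=
            sum_f_R0 (fun m => (if (m == 1)%N then 1 else 0) + selterm a nu m) n.
    apply: sum_Rle => m _; exact: Q_le.
  rewrite sum_plus in h1.
  have h2 := ind_sum n.
  have h3 := selsum_Hs a nu n ha (Rlt_le _ _ (Rlt_trans _ _ _ ha han)).
  have h4 := Hs_ub t (cnt a (S n)) ht.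
  replace (1 + t) with (nu / a) in h4 by (rewrite /t; ring).
  lra.
have hb : has_ub (sum_f_R0 (Q_term (Qa a) nu)).
  exists (2 + / t) => x [i ->]; exact: hub.
have [l hl] := growing_cv _ (growing_Q a nu) hb.
by exists l.
Qed.

Lemma not_summable_below a nu : 0 < nu -> nu < a -> a <= 1 -> ~ Q_summable (Qa a) nu.
Proof.
move=> hnu hna ha1 [l hl].
have Hub : forall n, sum_f_R0 (Q_term (Qa a) nu) n <= l := growing_ineq _ _ (growing_Q a nu) hl.
have Hsel : forall n, sum_f_R0 (selterm a nu) n <= l.
  move=> n; apply: Rle_trans (Hub n); apply: sum_Rle => m _; exact: sel_Q.
have Hl0 : 0 <= l by have := Hsel 0%N; have := selterm_ge0 a nu 0; simpl; lra.
have HA : forall n x, INR n <= x -> 0 < x ->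
    INR (cnt a (S n)) * Rpower x (- nu) <= sum_f_R0 (selterm a nu) n.
  elim => [|n IH] x hx hx0.
    have -> : cnt a 1 = 0%N by [].
    rewrite /= /selterm sel0; lra.
  rewrite cntS.
  have IH' := IH x ltac:(rewrite S_INR in hx; lra) hx0.
  change (sum_f_R0 (selterm a nu) (S n)) with (sum_f_R0 (selterm a nu) n + selterm a nu (S n)).
  rewrite /selterm; rewrite /selterm in IH'.
  case hs: (sel a (S n)); last by rewrite addn0; lra.
  rewrite addn1 S_INR Rmult_plus_distr_r Rmult_1_l.
  have : Rpower x (- nu) <= Rpower (INR (S n)) (- nu).
    apply: Rpow_decr => //; [apply: lt_0_INR; lia | lra].
  lra.
have HB : forall n, (1 <= n)%N -> INR (cnt a (S n)) <= l * Rpower (INR n) nu.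
  move=> n hn.
  have hx0 : 0 < INR n by apply: lt_0_INR; lia.
  have := HA n (INR n) (Rle_refl _) hx0.
  rewrite Rpower_Ropp.
  have hP := Rpower_pos (INR n) nu.
  have hPi : 0 < / Rpower (INR n) nu by apply: Rinv_0_lt_compat.
  have := Hsel n.
  move=> h1 h2.
  apply: (Rmult_le_reg_r (/ Rpower (INR n) nu)) => //.
  rewrite Rmult_assoc Rinv_r; lra.
have HC : exists N0, (2 <= N0)%N /\ forall p, prime p -> (N0 <= p)%N -> sel a p.
  set X0 := Rpower (l + 1) (/ (a - nu)).
  have [N1 hN1] := INR_unbounded X0.
  exists (N1 + 2)%N; split; first lia.
  move=> p pp hp.
  rewrite /sel pp /=; apply/RlebP.
  have hp1 : (1 <= p.-1)%N by lia.
  have hc := HB p.-1 hp1.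
  rewrite prednK in hc; last lia.
  have hP1 : 1 <= INR p by apply: (le_INR 1); lia.
  have hPX : X0 <= INR p.
    have : INR N1 <= INR p by apply: le_INR; lia.
    lra.
  have h1 : Rpower (INR p.-1) nu <= Rpower (INR p) nu.
    apply: Rle_Rpower_l; first lra.
    split; [apply: lt_0_INR; lia | apply: le_INR; lia].
  have h2 : 1 <= Rpower (INR p) nu.
    rewrite -(Rpower_O (INR p)); last lra.
    apply: Rle_Rpower => //; lra.
  have h3 : l + 1 <= Rpower (INR p) (a - nu).
    have -> : l + 1 = Rpower X0 (a - nu).
      rewrite /X0 Rpower_mult.
      replace (/ (a - nu) * (a - nu)) with 1 by (field; lra).
      rewrite Rpower_1; lra.
    apply: Rle_Rpower_l; first lra.
    split => //; exact: Rpower_pos.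
  have h4 : Rpower (INR p) a = Rpower (INR p) (a - nu) * Rpower (INR p) nu.
    rewrite -Rpower_plus; f_equal; ring.
  have h5 : l * Rpower (INR p.-1) nu <= l * Rpower (INR p) nu by apply: Rmult_le_compat_l.
  have h6 : (l + 1) * Rpower (INR p) nu <= Rpower (INR p) (a - nu) * Rpower (INR p) nu.
    apply: Rmult_le_compat_r => //; lra.
  rewrite h4; lra.
have [N0 [hN0 HN0]] := HC.
set S := fun n => sum_f_R0 (fun m => if prime m && (N0 <= m)%N then / INR m else 0) n.
have HS : forall n, S n <= l.
  move=> n; apply: Rle_trans (Hsel n); apply: sum_Rle => m _.
  case h: (prime m && (N0 <= m)%N); last exact: selterm_ge0.
  move/andP: h => [pm hm]; rewrite /selterm HN0 //.
  have hm1 : 1 <= INR m by apply: (le_INR 1); lia.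
  rewrite Rpower_Ropp; apply: Rinv_le_contravar; first exact: Rpower_pos.
  rewrite -{2}(Rpower_1 (INR m)); last lra.
  apply: Rle_Rpower => //; lra.
have HE : forall T, (N0 <= T)%N -> exists N, (T <= N)%coq_nat /\ S T + 1/2 <= S N.
  move=> T hT.
  have [N [hTN hN]] := erdos T.
  exists N; split => //.
  rewrite /S (split_sum _ T N hTN).
  have -> : sum_f_R0 (fun m => if (T < m)%N then (if prime m && (N0 <= m)%N then / INR m else 0) else 0) N
          = sum_f_R0 (fun m => if prime m && (T < m)%N then / INR m else 0) N.
    apply: PartSum.sum_eq => m _.
    case: (prime m); case hTm: (T < m)%N => //=.
    have -> : (N0 <= m)%N by lia.
    by [].
  lra.
have HF : forall k : nat, exists n, (N0 <= n)%N /\ S N0 + INR k / 2 <= S n.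
  elim => [|k [n [hn hk]]].
    exists N0; split => //; rewrite /=; lra.
  have [N [hnN hN]] := HE n hn.
  exists N; split; first lia.
  rewrite S_INR; lra.
have [k hk] := INR_unbounded (2 * l).
have [n [_ hn]] := HF k.
have := HS n.
have : 0 <= S N0.
  apply: sum_nonneg => m; case h: (prime m && (N0 <= m)%N); last lra.
  move/andP: h => [_ hm].
  apply: Rlt_le; apply: Rinv_0_lt_compat; apply: lt_0_INR; lia.
lra.
Qed.

Lemma Qa_subset a : subset_Nstar (Qa a).
Proof.
move=> q; rewrite /Qa => /orP [/eqP -> | hs]; first lia.
have := prime_gt0 (sel_prime _ _ hs); lia.
Qed.

Lemma Qa_free a : compl_free (Qa a).
Proof.
move=> q hq; split.
- move=> HQ [v [hv [hQv [z hz]]]].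
  have hdiv : (v %| q)%N by apply/dvdnP; exists z.
  move: HQ; rewrite /Qa => /orP [/eqP hq1 | hs].
    move: hdiv; rewrite hq1 dvdn1 => /eqP hv1; subst v.
    by move: hQv; rewrite /Qa.
  have pq := sel_prime _ _ hs.
  move: pq => /primeP [_ Hd].
  move: (Hd v hdiv) => /orP [/eqP hv1 | /eqP hvq]; subst v.
    by move: hQv; rewrite /Qa.
  by move: hQv; rewrite /Qa hs orbT.
- move=> H; case E: (Qa a q) => //; exfalso; apply: H.
  exists q; split => //; split => //; exact: Nat.divide_refl.
Qed.

Theorem mainTheorem7 (alpha : R) (Halpha : 0 < alpha <= 1) :
  exists Q : nat -> bool,
    subset_Nstar Q /\ infinite_set Q /\ compl_free Q /\
    exponent_of_convergence_is Q alpha.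
Proof.
case: Halpha => ha0 ha1.
exists (Qa alpha); split; first exact: Qa_subset.
split.
  move=> N; apply: NNPP => hne.
  have hz : forall q, (N < q)%coq_nat -> Q_term (Qa alpha) (alpha / 2) q = 0.
    move=> q hq; rewrite /Q_term.
    case E: (Qa alpha q) => //; exfalso; apply: hne; by exists q.
  have hc : forall d, sum_f_R0 (Q_term (Qa alpha) (alpha / 2)) (N + d)%coq_nat =
                      sum_f_R0 (Q_term (Qa alpha) (alpha / 2)) N.
    elim => [|d IH]; first by rewrite Nat.add_0_r.
    rewrite Nat.add_succ_r /= IH hz; [ring | lia].
  apply: (not_summable_below alpha (alpha / 2)); [lra | lra | lra |].
  exists (sum_f_R0 (Q_term (Qa alpha) (alpha / 2)) N) => eps heps.
  exists N => n hn.
  replace n with (N + (n - N))%coq_nat by lia.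
  rewrite hc Rdist_eq; lra.
split; first exact: Qa_free.
split.
- move=> nu hnu hs.
  case: (Rle_or_lt alpha nu) => // h; exfalso.
  exact: (not_summable_below alpha nu hnu h ha1 hs).
- move=> b hb.
  case: (Rle_or_lt b alpha) => // h.
  have := hb ((alpha + b) / 2) ltac:(lra) (summable_above alpha ((alpha + b) / 2) ha0 ltac:(lra)).
  lra.
Qed.
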